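(* Let $n,m$ be positive integers, $\lambda\in\mathcal{P}^m_n$, and let $k_{i,j}=k_{i,j}(\lambda)$ be defined recursively by $$k_{i,j}=\min\left\{m,\left\lceil\frac{\lambda_i-\sum_{\ell=j+1}^n k_{i,\ell}+\sum_{\ell=i+1}^j k_{\ell,j}}{j-i+1}\right\rceil\right\},\quad 1\le i\le j\le n.$$ Then $k_{i,j}\ge k_{i,j-1}$ for all $1\le i<j\le n$.
   Context: $\mathcal{P}^m_n$ is the set of integer partitions $(\lambda_1\ge\cdots\ge\lambda_n\ge0)$ with $\lambda_i\le m(n-i+1)$ for all $i$. The recursion is carried out in order of decreasing $i$ and, for fixed $i$, decreasing $j$ (the right-hand side only involves $k_{i,\ell}$ with $\ell>j$ and $k_{\ell,j}$ with $\ell>i$). *)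

(* Defs.v *)
From mathcomp Require Import all_boot all_order all_algebra.
Set Implicit Arguments. Unset Strict Implicit. Unset Printing Implicit Defensive.
Import Order.TTheory GRing.Theory Num.Theory.
Local Open Scope ring_scope.

(* lambda_i is [lam i] for 1 <= i <= n (1-indexed; other values unused).
   Membership in P^m_n. *)
Definition in_Pmn (n m : nat) (lam : nat -> nat) : Prop :=
  (forall i, (1 <= i)%N -> (i < n)%N -> (lam i.+1 <= lam i)%N) /\
  (forall i, (1 <= i)%N -> (i <= n)%N -> (lam i <= m * (n - i + 1))%N).

(* The value of the recursion formula for the entry (i,j), given the
   already computed entries [row l = k_{i,l}] (l > j) and
   [K l j = k_{l,j}] (l > i). *)
Definition kstep (n m : nat) (lam : nat -> nat) (i j : nat)
    (row : nat -> int) (K : nat -> nat -> int) : int :=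
  Order.min (m%:Z)
    (Num.ceil (((lam i)%:Z - (\sum_(j.+1 <= l < n.+1) row l)
                 + (\sum_(i.+1 <= l < j.+1) K l j))%:~R
               / ((j - i + 1)%N%:R) : rat)).

(* Row i, computed for j = n, n-1, ..., in decreasing order:
   after t steps, entries j >= n - t are correct. *)
Fixpoint krow (n m : nat) (lam : nat -> nat) (i : nat)
    (K : nat -> nat -> int) (t : nat) : nat -> int :=
  match t with
  | 0 => fun j => if j == n then kstep n m lam i n (fun _ => 0) K else 0
  | t'.+1 => let r := krow n m lam i K t' in
      fun j => if j == (n - t)%N then kstep n m lam i j r K else r j
  end.

(* Rows computed for i = n, n-1, ..., 1: after s steps, rows i > n - s
   are correct. *)
Fixpoint kaux (n m : nat) (lam : nat -> nat) (s : nat) : nat -> nat -> int :=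
  match s with
  | 0 => fun _ _ => 0
  | s'.+1 => let K := kaux n m lam s' in
      fun i j => if i == (n - s')%N then krow n m lam i K n j else K i j
  end.

Definition k (n m : nat) (lam : nat -> nat) : nat -> nat -> int :=
  kaux n m lam n.

(* Main.v *)
Require Import Defs.
From mathcomp Require Import all_boot all_order all_algebra.
From mathcomp Require Import zify ring lra.
Import Order.TTheory GRing.Theory Num.Theory.
Local Open Scope ring_scope.
Section S.
Variables (n m : nat) (lam : nat -> nat).

Lemma kstep_congr i j r r' K K' :
  (forall l, (j < l)%N -> (l <= n)%N -> r l = r' l) ->
  (forall l, (i < l)%N -> K l j = K' l j) ->
  kstep n m lam i j r K = kstep n m lam i j r' K'.
Proof.
move=> hr hK; rewrite /kstep.
rewrite (@eq_big_nat _ _ _ j.+1 n.+1 r r'); last by move=> l /andP[a b]; apply: hr.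
by rewrite (@eq_big_nat _ _ _ i.+1 j.+1 (fun l => K l j) (fun l => K' l j)) //;
  move=> l /andP[a b]; apply: hK.
Qed.

Lemma krow_congr i K K' t :
  (forall l j, (i < l)%N -> K l j = K' l j) ->
  krow n m lam i K t =1 krow n m lam i K' t.
Proof.
move=> hK; elim: t => [|t IH] j /=.
  case: eqP => // _; apply: kstep_congr => // l il; exact: hK.
case: eqP => // _; apply: kstep_congr => [l _ _|l il]; [exact: IH|exact: hK].
Qed.

Lemma krow_stable i K t t' l : (1 <= l)%N -> (n - t <= l)%N -> (t <= t')%N ->
  krow n m lam i K t' l = krow n m lam i K t l.
Proof.
move=> l1 hl; elim: t' => [|t' IH]; first by rewrite leqn0 => /eqP->.
rewrite leq_eqVlt => /orP[/eqP->//|ht] /=.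
rewrite IH //; case: eqP => // e; exfalso; lia.
Qed.

Lemma krow_rec i K j : (1 <= j)%N -> (j <= n)%N ->
  krow n m lam i K n j = kstep n m lam i j (krow n m lam i K n) K.
Proof.
move=> j1 jn; rewrite (@krow_stable i K (n - j)) //; try lia.
case e: (n - j)%N => [|t] /=.
  have -> : j = n by lia.
  rewrite eqxx; apply: kstep_congr => // l; lia.
rewrite -e subKn // eqxx; apply: kstep_congr => // l l1 l2.
rewrite (@krow_stable i K t n l) //; lia.
Qed.

Lemma kaux_stable s s' i j : (1 <= i)%N -> (n - s < i)%N -> (s <= s')%N ->
  kaux n m lam s' i j = kaux n m lam s i j.
Proof.
move=> i1 hi; elim: s' => [|s' IH]; first by rewrite leqn0 => /eqP->.
rewrite leq_eqVlt => /orP[/eqP->//|hs] /=.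
rewrite IH //; case: eqP => // e; exfalso; lia.
Qed.

Lemma kaux_big s i j : (n < i)%N -> kaux n m lam s i j = 0.
Proof.
move=> hi; elim: s => [|s IH] //=; case: eqP => // e; exfalso; lia.
Qed.

Lemma k_row i j : (1 <= i)%N -> (i <= n)%N ->
  k n m lam i j = krow n m lam i (kaux n m lam (n - i)) n j.
Proof.
move=> i1 iN; rewrite /k (@kaux_stable (n - i).+1) //; try lia.
by rewrite /= subKn // eqxx.
Qed.

Lemma kE i j : (1 <= i)%N -> (i <= n)%N -> (1 <= j)%N -> (j <= n)%N ->
  k n m lam i j = kstep n m lam i j (k n m lam i) (k n m lam).
Proof.
move=> i1 iN j1 jN; rewrite k_row // krow_rec //.
apply: kstep_congr => [l _ _|l il]; first by rewrite [RHS]k_row.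
case: (leqP l n) => ln.
  rewrite /k (@kaux_stable (n - i) n) //; lia.
by rewrite /k !kaux_big.
Qed.

Lemma F1 (S : int) (d : nat) (a : int) : (0 < d)%N ->
  (Num.ceil ((S%:~R) / (d%:R) : rat) <= a) = (S <= a * d%:Z).
Proof.
move=> d0; rewrite ceil_le_int ler_pdivrMr ?ltr0n //.
by rewrite -[d%:R]/((d%:Z)%:~R) -intrM ler_int.
Qed.

Lemma F2 (S : int) (d : nat) : (0 < d)%N ->
  S <= Num.ceil ((S%:~R) / (d%:R) : rat) * d%:Z.
Proof. by move=> d0; rewrite -F1. Qed.

Lemma F3 (S : int) : Num.ceil ((S%:~R) / (1%N%:R) : rat) = S.
Proof. by rewrite divr1 intrKceil. Qed.

Let K := k n m lam.
Definition X i j : int := (lam i)%:Z - \sum_(j.+1 <= l < n.+1) K i l.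
Definition C i j : int := \sum_(i.+1 <= l < j.+1) K l j.

Lemma kstepE i j : (1 <= i)%N -> (i <= n)%N -> (1 <= j)%N -> (j <= n)%N ->
  K i j = Order.min (m%:Z) (Num.ceil (((X i j + C i j)%:~R / ((j - i + 1)%N%:R)) : rat)).
Proof. by move=> *; rewrite /K kE. Qed.

Lemma Xstep i j : (1 <= j)%N -> (j <= n)%N -> X i j.-1 = X i j - K i j.
Proof.
move=> j1 jn; rewrite /X prednK // (@big_ltn _ _ _ j n.+1) // opprD addrA addrAC; reflexivity.
Qed.

Lemma Cstep i j : (i < j)%N -> C i j = \sum_(i.+1 <= l < j) K l j + K j j.
Proof. by move=> ij; rewrite /C big_nat_recr. Qed.

Lemma Cbelow i j : (i < j)%N -> C i j = K i.+1 j + C i.+1 j.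
Proof. by move=> ij; rewrite /C big_ltn. Qed.

Lemma Kdiag i : (1 <= i)%N -> (i <= n)%N -> K i i = Order.min (m%:Z) (X i i).
Proof.
move=> *; rewrite kstepE // subnn /C big_geq // addr0; by rewrite F3.
Qed.

Hypothesis hP : in_Pmn n m lam.

Lemma claim1 i : (1 <= i)%N -> (i < n)%N -> forall t j, j = (n - t)%N -> (i <= j)%N ->
  X i.+1 j <= X i j.
Proof.
move=> i1 iN; elim=> [|t IH] j ->.
  move=> _; rewrite subn0 /X !big_geq // !subr0 lez_nat.
  by case: hP => h _; apply: h.
move=> hij; set J := (n - t)%N.
have hJ : (n - t.+1)%N = J.-1 by rewrite /J; lia.
have J1 : (1 <= J)%N by rewrite /J; lia.
have Jn : (J <= n)%N by rewrite /J; lia.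
have iJ : (i < J)%N by rewrite /J; lia.
have := IH J erefl (ltnW iJ) => IHJ.
rewrite hJ !Xstep //.
have hb := @kstepE i.+1 J isT iN J1 Jn.
have ha := @kstepE i J i1 (ltnW iN) J1 Jn.
rewrite minEle in hb; move: hb; case: ifP => hm hb.
  rewrite hb; suff : K i J <= m%:Z by lia.
  by rewrite ha ge_min lexx.
suff : K i J <= X i J - X i.+1 J + K i.+1 J by lia.
rewrite ha ge_min; apply/orP; right.
rewrite F1; last by lia.
rewrite (@Cbelow i J iJ).
have hd : (J - i.+1 + 1 = J - i)%N by lia.
have := @F2 (X i.+1 J + C i.+1 J) (J - i.+1 + 1) ltac:(lia).
rewrite -hb hd => h2.
have hd2 : ((J - i + 1)%N%:Z) = (J - i)%N%:Z + 1 by lia.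
rewrite hd2.
have D1 : 1 <= (J - i)%N%:Z by rewrite lez_nat; lia.
have h3 : (J - i)%N%:Z * X i.+1 J <= (J - i)%N%:Z * X i J.
  by rewrite ler_pM2l //; lia.
move: h2 h3 D1 IHJ; generalize ((J - i)%N%:Z) (X i J) (X i.+1 J) (K i.+1 J) (C i.+1 J).
move=> D a b c e; nia.
Qed.


Lemma Kdiag_ge0 i : (1 <= i)%N -> (i <= n)%N -> 0 <= K i i.
Proof.
move=> i1 iN; rewrite Kdiag // le_min; apply/andP; split; first by [].
case: (ltnP i n) => hin; last first.
  have -> : i = n by lia.
  by rewrite /X big_geq // subr0.
have h1 := @claim1 i i1 hin (n - i) i ltac:(lia) (leqnn i).
have := @Xstep i.+1 i.+1 isT hin; rewrite /= => hx.
rewrite hx in h1.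
have : K i.+1 i.+1 <= X i.+1 i.+1 by rewrite Kdiag // ge_min lexx orbT.
lia.
Qed.

Lemma claim3 t i : (n - i <= t)%N -> (1 <= i)%N ->
  forall j, (i < j)%N -> (j <= n)%N -> K i j.-1 <= K i j.
Proof.
elim: t i => [|t IH] i hi i1 j ij jn; first by exfalso; lia.
have j1 : (1 <= j)%N by lia.
have jp1 : (1 <= j.-1)%N by lia.
have iN : (i <= n)%N by lia.
have ha := @kstepE i j i1 iN j1 jn.
have hp := @kstepE i j.-1 i1 iN jp1 ltac:(lia).
rewrite minEle in ha; move: ha; case: ifP => hm ha.
  by rewrite ha hp ge_min lexx.
rewrite hp ge_min; apply/orP; right.
rewrite F1; last by lia.
have h2 := @F2 (X i j + C i j) (j - i + 1) ltac:(lia).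
rewrite -ha in h2.
rewrite Xstep //.
have hC : C i j.-1 <= C i j.
  rewrite (@Cstep i j ij) /C prednK //.
  apply: ler_wpDr; first exact: Kdiag_ge0.
  apply: ler_sum_nat => l /andP[l1 l2].
  apply: (IH l); lia.
have hd : (j.-1 - i + 1 = j - i)%N by lia.
rewrite hd.
have hd2 : ((j - i + 1)%N%:Z) = (j - i)%N%:Z + 1 by lia.
rewrite hd2 in h2.
move: h2 hC; generalize ((j - i)%N%:Z) (X i j) (C i j) (C i j.-1) (K i j).
move=> D x c c' a; nia.
Qed.

End S.

Theorem lemma4p3 (n m : nat) (lam : nat -> nat) :
  (0 < n)%N -> (0 < m)%N -> in_Pmn n m lam ->
  forall i j : nat, (1 <= i)%N -> (i < j)%N -> (j <= n)%N ->
    k n m lam i j.-1 <= k n m lam i j.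
Proof.
move=> _ _ hP i j i1 ij jn.
exact: (@claim3 n m lam hP (n - i) i (leqnn _) i1 j ij jn).
Qed.
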